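(* Let $s,t,k$ be non-negative integers with $t \le A(s,2k-2,k)$. For every family $\mathscr{F}$ of $t$ graphs, each having $n$ vertices and being $p$-almost equitably $k$-colorable, \[ \mathscr{U}(\mathscr{F}) ~\le~ s\left\lceil \frac{n-p}{k}\right\rceil + tp . \]
   Context: All graphs are finite and simple. A graph $U$ is an induced-universal graph for a family $\mathscr{F}$ if every graph of $\mathscr{F}$ is isomorphic to an induced subgraph of $U$; $\mathscr{U}(\mathscr{F})$ is the smallest number of vertices of such a $U$. A $k$-coloring is equitable if its $k$ color classes (stable sets) have sizes pairwise differing by at most one; a graph $G$ is $p$-almost equitably $k$-colorable if there is a set $X$ of at most $p$ vertices such that $G\setminus X$ has an equitable $k$-coloring. $A(n,d,w)$ denotes the maximum number of binary words of length $n$ and Hamming weight $w$ that are pairwise at Hamming distance at least $d$; equivalently $A(n,2k-2,k)$ is the maximum number of pairwise edge-disjoint copies of $K_k$ in $K_n$. *)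

(* Defs.v *)
From mathcomp Require Import all_boot.
Set Implicit Arguments. Unset Strict Implicit. Unset Printing Implicit Defensive.

Definition simple_graph (V : finType) (e : rel V) : Prop :=
  (forall x, ~~ e x x) /\ (forall x y, e x y = e y x).

Definition induced_sub (V W : finType) (g : rel V) (u : rel W) : Prop :=
  exists f : V -> W, injective f /\ forall x y, g x y = u (f x) (f y).

Definition stable (V : finType) (g : rel V) (S : {set V}) : Prop :=
  forall x y, x \in S -> y \in S -> ~~ g x y.

Definition equitable_coloring_on (V : finType) (g : rel V) (D : {set V}) (k : nat)
    (P : 'I_k -> {set V}) : Prop :=
  [/\ forall i, P i \subset D,
      forall v, v \in D -> exists i, v \in P i,
      forall i j, i != j -> [disjoint P i & P j],
      forall i, stable g (P i)
    & forall i j, #|P i| <= #|P j| + 1].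

Definition almost_equitably_colorable (V : finType) (g : rel V) (p k : nat) : Prop :=
  exists X : {set V}, #|X| <= p /\
    exists P : 'I_k -> {set V}, equitable_coloring_on g (~: X) P.

Definition hweight (n : nat) (u : {ffun 'I_n -> bool}) : nat := #|[set i | u i]|.
Definition hdist (n : nat) (u v : {ffun 'I_n -> bool}) : nat :=
  #|[set i | u i != v i]|.

Definition cw_code (n d w : nat) (C : {set {ffun 'I_n -> bool}}) : bool :=
  [forall u : {ffun 'I_n -> bool}, (u \in C) ==> (hweight u == w)] &&
  [forall u : {ffun 'I_n -> bool}, forall v : {ffun 'I_n -> bool}, [&& u \in C, v \in C & u != v] ==> (d <= hdist u v)].

Definition A (n d w : nat) : nat :=
  \max_(C : {set {ffun 'I_n -> bool}} | @cw_code n d w C) #|C|.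

Definition induced_universal (t n m : nat) (F : 'I_t -> rel 'I_n) (U : rel 'I_m) : Prop :=
  simple_graph U /\ forall i, induced_sub (F i) U.

(* Main.v *)
Require Import Defs.
From mathcomp Require Import all_boot zify.
Set Implicit Arguments. Unset Strict Implicit. Unset Printing Implicit Defensive.

Lemma codeP s k t : 0 < t -> t <= A s (2*k-2) k ->
  exists w : 'I_t -> {ffun 'I_s -> bool}, [/\ injective w,
    forall i, hweight (w i) = k &
    forall i i', i != i' -> 2*k-2 <= hdist (w i) (w i')].
Proof.
move=> tp tA.
have : 0 < #|[pred C | @cw_code s (2*k-2) k C]|.
  apply/card_gt0P; exists set0; rewrite inE /cw_code.
  by apply/andP; split; apply/forallP => u; [|apply/forallP => v]; rewrite inE.
case/(eq_bigmax_cond (fun C : {set {ffun 'I_s -> bool}} => #|C|)) => C CP E.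
have tC : t <= #|C| by apply: leq_trans tA _; rewrite /A E.
move: CP; rewrite inE => /andP [/forallP H1 /forallP H2].
exists (fun i => enum_val (widen_ord tC i)); split.
- move=> a b /enum_val_inj /(congr1 val) /= ab; exact: val_inj.
- by move=> i; apply/eqP; move: (H1 (enum_val (widen_ord tC i))); rewrite enum_valP.
- move=> i i' ii; move: (H2 (enum_val (widen_ord tC i))) => /forallP /(_ (enum_val (widen_ord tC i'))).
  rewrite !enum_valP /= => /implyP; apply.
  apply/negP => /eqP E'; move: (enum_val_inj E') => /(congr1 val) /= ab.
  by move/negP: ii; apply; apply/eqP/val_inj.
Qed.

Lemma inter2 s k (u v : {ffun 'I_s -> bool}) (j j' : 'I_s) :
  hweight u = k -> hweight v = k -> 2*k-2 <= hdist u v ->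
  j != j' -> u j -> v j -> u j' -> v j' -> False.
Proof.
rewrite /hweight /hdist => hu hv hd jj uj vj uj' vj'.
set S := [set i | u i] in hu; set S' := [set i | v i] in hv.
have DE : [set i | u i != v i] = (S :|: S') :\: (S :&: S').
  by apply/setP => i; rewrite !inE; case: (u i); case: (v i).
have IE : (S :|: S') :&: (S :&: S') = S :&: S'.
  by apply/setP => i; rewrite !inE; case: (u i); case: (v i).
have I2 : 2 <= #|S :&: S'|.
  have : #|[set j; j']| <= #|S :&: S'|.
    by apply: subset_leq_card; apply/subsetP => i; rewrite !inE => /orP [] /eqP ->; rewrite ?uj ?vj ?uj' ?vj'.
  by rewrite cards2 jj.
have := cardsUI S S'; rewrite hu hv; move: hd; rewrite DE cardsD IE.
have : #|S :&: S'| <= #|S :|: S'|.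
  by apply: subset_leq_card; apply/subsetP => i; rewrite !inE => /andP [-> _].
lia.
Qed.
Lemma core (n p k c : nat) (X : {set 'I_n}) (P : 'I_k -> {set 'I_n}) :
  c = (n - p + (k-1)) %/ k ->
  #|X| <= p ->
  (forall v, v \in ~: X -> exists i, v \in P i) ->
  (forall i j, i != j -> [disjoint P i & P j]) ->
  (forall i j, #|P i| <= #|P j| + 1) ->
  exists h : 'I_n -> option (('I_k * 'I_c) + 'I_p),
   [/\ forall x, h x != None, injective h &
       forall x l q, h x = Some (inl (l,q)) -> x \in P l].
Proof.
move=> cE Xp cover disj hsz.
pose inY l x := (x \in P l) && (index x (enum (P l)) < c).
pose Y := [set x | [exists l, inY l x]].
have cardR : #|~: Y| <= p.
  suff: n - p <= #|Y| by have := cardsC Y; rewrite card_ord; lia.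
  case: (boolP [forall l, #|P l| <= c]) => [/forallP small | ].
  - apply: leq_trans (_ : #|~: X| <= _).
      by have := cardsC X; rewrite card_ord; lia.
    apply: subset_leq_card; apply/subsetP => x xX.
    have [l xl] := cover x xX.
    rewrite inE; apply/existsP; exists l; rewrite /inY xl /=.
    apply: leq_trans (small l).
    by rewrite cardE index_mem mem_enum.
  rewrite negb_forall => /existsP [l0]; rewrite -ltnNge => hl0.
  have /set0Pn [x0 _] : P l0 != set0 by rewrite -card_gt0; lia.
  have geq l : c <= #|P l| by have := hsz l0 l; lia.
  pose g (lq : 'I_k * 'I_c) := nth x0 (enum (P lq.1)) lq.2.
  have gin lq : g lq \in P lq.1.
    by rewrite /g -mem_enum; apply: mem_nth; rewrite -cardE; apply: leq_trans (geq _).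
  have gidx lq : index (g lq) (enum (P lq.1)) = lq.2.
    by rewrite /g index_uniq ?enum_uniq // -cardE; apply: leq_trans (geq _).
  have ginj : injective g.
    move=> [l q] [l' q'] E.
    have ll : l = l'.
      apply/eqP; apply/negPn/negP => /disj D.
      by have := disjointFr D (gin (l,q)); rewrite E gin.
    subst l'; congr pair; apply: val_inj.
    by have := gidx (l,q); rewrite E gidx /= => ->.
  have : #|g @: (setT : {set ('I_k * 'I_c)%type})| <= #|Y|.
    apply: subset_leq_card; apply/subsetP => y /imsetP [lq _ ->].
    rewrite inE; apply/existsP; exists lq.1; rewrite /inY gin gidx /=.
    exact: ltn_ord.
  rewrite card_imset // cardsT card_prod !card_ord => H.
  have : 0 < k by apply: leq_ltn_trans (ltn_ord l0).
  move=> kp; apply: leq_trans H; rewrite cE; lia.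
pose h x : option (('I_k * 'I_c) + 'I_p) :=
  if [pick l | inY l x] is Some l then
    omap (fun q => inl (l,q)) (insub (index x (enum (P l))) : option 'I_c)
  else omap inr (insub (index x (enum (~: Y))) : option 'I_p).
have spec x : (exists l q, [/\ h x = Some (inl (l,q)), x \in P l & val q = index x (enum (P l))])
   \/ (exists r, [/\ h x = Some (inr r), x \in ~: Y & val r = index x (enum (~: Y))]).
  rewrite /h; case: pickP => [l /andP[xl il] | nY].
    case: insubP => [q _ qv|]; last by rewrite il.
    by left; exists l, q.
  have xY : x \in ~: Y.
    by rewrite !inE negb_exists; apply/forallP => l; rewrite nY.
  case: insubP => [r _ rv|]; first by right; exists r.
  move/negP; case; apply: leq_trans cardR; rewrite cardE index_mem mem_enum //.
exists h; split.
- by move=> x; case: (spec x) => [[l [q [-> _ _]]] | [r [-> _ _]]].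
- move=> x y; case: (spec x) => [[l [q [-> xl qx]]] | [r [-> xl qx]]];
    case: (spec y) => [[l' [q' [-> yl qy]]] | [r' [-> yl qy]]] //.
  + case=> ll qq; subst l' q'.
    have xe : x \in enum _ := (etrans (mem_enum _ x) xl).
    have ye : y \in enum _ := (etrans (mem_enum _ y) yl).
    rewrite -(nth_index x xe) -(nth_index x ye).
    by rewrite -qx -qy.
  + case=> qq; subst r'.
    have xe : x \in enum _ := (etrans (mem_enum _ x) xl).
    have ye : y \in enum _ := (etrans (mem_enum _ y) yl).
    rewrite -(nth_index x xe) -(nth_index x ye).
    by rewrite -qx -qy.
- move=> x l q; case: (spec x) => [[l' [q' [-> xl _]]] | [r [-> _ _]]] //.
  by case=> <-.
Qed.

Lemma pergraph (s t k n p c : nat) (i : 'I_t) (g : rel 'I_n) (w : {ffun 'I_s -> bool}) :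
  c = (n - p + (k-1)) %/ k -> hweight w = k -> almost_equitably_colorable g p k ->
  exists fo : 'I_n -> option (('I_s * 'I_c) + ('I_t * 'I_p)),
   [/\ forall x, fo x != None, injective fo,
       forall x i' r, fo x = Some (inr (i', r)) -> i' = i,
       forall x j q, fo x = Some (inl (j,q)) -> w j &
       forall x y j q q', fo x = Some (inl (j,q)) -> fo y = Some (inl (j,q')) -> ~~ g x y].
Proof.
move=> cE hw [X [Xp [P [sub cov disj st sz]]]].
have [h [hN hinj hP]] := core cE Xp cov disj sz.
pose S := [set j | w j].
have HS : #|S| = k by [].
pose sig (l : 'I_k) : 'I_s := enum_val (A := S) (cast_ord (esym HS) l).
have sigP l : w (sig l).
  by have := enum_valP (A := S) (cast_ord (esym HS) l); rewrite inE.
have siginj : injective sig.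
  by move=> a b /enum_val_inj /cast_ord_inj.
pose tr (z : ('I_k * 'I_c) + 'I_p) : ('I_s * 'I_c) + ('I_t * 'I_p) :=
  match z with inl lq => inl (sig lq.1, lq.2) | inr r => inr (i, r) end.
have trinj : injective tr.
  move=> [[l q]|r] [[l' q']|r'] //=; first by case=> /siginj -> ->.
  by case=> ->.
exists (fun x => omap tr (h x)); split.
- by move=> x; move: (hN x); case: (h x).
- move=> x y /=; case Ex: (h x) => [zx|]; last by move: (hN x); rewrite Ex.
  case Ey: (h y) => [zy|]; last by move: (hN y); rewrite Ey.
  by case=> /trinj E; apply: hinj; rewrite Ex Ey E.
- by move=> x i' r /=; case: (h x) => [[[l q]|r0]|] //= [] ->.
- by move=> x j q /=; case: (h x) => [[[l q0]|r0]|] //= [] <- _.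
- move=> x y j q q' /=.
  case Ex: (h x) => [[[l q0]|r0]|] //= [E1 _].
  case Ey: (h y) => [[[l' q1]|r1]|] //= [E2 _].
  have ll : l = l' by apply: siginj; rewrite E1 E2.
  subst l'.
  exact: st (hP _ _ _ Ex) (hP _ _ _ Ey).
Qed.

Theorem theorem3 (s t k n p : nat) (F : 'I_t -> rel 'I_n) :
  t <= A s (2 * k - 2) k ->
  (forall i, simple_graph (F i)) ->
  (forall i, almost_equitably_colorable (F i) p k) ->
  exists m : nat,
    m <= s * ((n - p + (k - 1)) %/ k) + t * p /\
    exists U : rel 'I_m, induced_universal F U.
Proof.
move=> tA simp col.
set c := (n - p + (k - 1)) %/ k.
case: (posnP t) => [t0 | tp].
  exists 0; split => //; exists (fun _ _ => false); split; first by split.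
  by move=> i; exfalso; have := ltn_ord i; move: (nat_of_ord i) => ii; rewrite t0.
case: (posnP n) => [n0 | np].
  subst n; exists 0; split => //; exists (fun _ _ => false); split; first by split.
  by move=> i; exists id; split => // -[].
have [w [winj wk wd]] := codeP tp tA.
have H := fun i => @pergraph s t k n p c i (F i) (w i) erefl (wk i) (col i).
have [FO HFO] := fin_all_exists H.
have [w0 _] : exists w0 : (('I_s * 'I_c) + ('I_t * 'I_p))%type, true.
  have [N _ _ _ _] := HFO (Ordinal tp).
  move: (N (Ordinal np)); case: (FO _ _) => [w0|] //; by exists w0.
pose f i x := odflt w0 (FO i x).
have fE i x : FO i x = Some (f i x).
  by rewrite /f; have [N _ _ _ _] := HFO i; move: (N x); case: (FO i x).
have finj i : injective (f i).
  by move=> x y E; have [_ I _ _ _] := HFO i; apply: I; rewrite !fE E.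
pose uW (a b : (('I_s * 'I_c) + ('I_t * 'I_p))%type) :=
  [exists i, exists x, exists y, [&& f i x == a, f i y == b & F i x y]].
have key i x y : uW (f i x) (f i y) = F i x y.
  apply/idP/idP; last first.
    by move=> Fxy; apply/existsP; exists i; apply/existsP; exists x; apply/existsP; exists y; rewrite !eqxx.
  case/existsP => i' /existsP [x' /existsP [y' /and3P [/eqP ex /eqP ey Fxy]]].
  case: (eqVneq i' i) => [ii | ii].
    by subst i'; rewrite -(finj i _ _ ex) -(finj i _ _ ey).
  have [_ _ Ci Di Ei] := HFO i; have [_ _ Ci' Di' Ei'] := HFO i'.
  have fx := fE i x; have fy := fE i y; have fx' := fE i' x'; have fy' := fE i' y'.
  rewrite ex in fx'; rewrite ey in fy'.
  case Ea: (f i x) fx fx' => [[j q] | [i0 r]] fx fx'; last first.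
    by move: (Ci _ _ _ fx) (Ci' _ _ _ fx') ii => -> ->; rewrite eqxx.
  case Eb: (f i y) fy fy' => [[j2 q2] | [i2 r2]] fy fy'; last first.
    by move: (Ci _ _ _ fy) (Ci' _ _ _ fy') ii => -> ->; rewrite eqxx.
  case: (eqVneq j j2) => [jj | jj].
    by subst j2; move: (Ei' _ _ _ _ _ fx' fy'); rewrite Fxy.
  exfalso; apply: (inter2 (wk i) (wk i') (wd i i' _) jj).
  - by rewrite eq_sym.
  - exact: Di _ _ _ fx.
  - exact: Di' _ _ _ fx'.
  - exact: Di _ _ _ fy.
  - exact: Di' _ _ _ fy'.
have uWsym a b : uW a b -> uW b a.
  case/existsP => i /existsP [x /existsP [y /and3P [ex ey Fxy]]].
  apply/existsP; exists i; apply/existsP; exists y; apply/existsP; exists x.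
  by rewrite ex ey /=; have [_ ->] := simp i.
pose Urel (x y : 'I_#|{: ('I_s * 'I_c) + ('I_t * 'I_p)}|) := uW (enum_val x) (enum_val y).
exists #|{: ('I_s * 'I_c) + ('I_t * 'I_p)}|; split.
  by rewrite card_sum !card_prod !card_ord.
exists Urel; split.
  split.
    move=> a; apply/negP; case/existsP => i /existsP [x /existsP [y /and3P [/eqP ex /eqP ey Fxy]]].
    move: ex; rewrite -ey => /finj E; subst y.
    by have [irr _] := simp i; move: (irr x); rewrite Fxy.
  by move=> a b; apply/idP/idP => /uWsym.
move=> i; exists (fun x => enum_rank (f i x)); split.
  by move=> x y /enum_rank_inj /finj.
by move=> x y; rewrite /Urel !enum_rankK key.
Qed.
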